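(* Let $q$ be a power of a prime $p$, let $n\ge 2$, and let $X=\{F=0\}\subset\mathbb{P}^n$ be a hypersurface of degree $d$ over $\mathbb{F}_q$ such that $d\leq q+1$ and $F$ is not a $p$-th power. Then for every $1\le r\le n-1$ there exists a linear subspace $H\subset\mathbb{P}^n$ defined over $\mathbb{F}_q$ of dimension $r$ such that $H\not\subset X$ and the restriction $F|_H$ is not a $p$-th power.
   Context: $F\in\mathbb{F}_q[x_0,\dots,x_n]$ is a nonzero homogeneous polynomial. ''$F$ is a $p$-th power'' means $F=G^p$ for some polynomial $G$ (over $\overline{\mathbb{F}_q}$), equivalently all partial derivatives of $F$ vanish. *)

(* Defs.v *)
From HB Require Import structures.
From mathcomp Require Import all_boot all_order all_algebra all_field.
From mathcomp Require Import mpoly.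
Set Implicit Arguments. Unset Strict Implicit. Unset Printing Implicit Defensive.
Import GRing.Theory.
Local Open Scope ring_scope.

(* A polynomial F is a p-th power: F = G^p for some polynomial G
   (over the perfect field F_q this is the same as over its algebraic closure). *)
Definition is_pth_power (K : fieldType) (m p : nat) (P : {mpoly K[m]}) : Prop :=
  exists G : {mpoly K[m]}, P = G ^+ p.

(* Restriction of P (in variables x_0..x_n) to the linear subspace parametrized
   by the columns of the (n+1) x (r+1) matrix M:  x_i := \sum_j M i j * y_j. *)
Definition restrict_lin (K : fieldType) (n r : nat) (M : 'M[K]_(n.+1, r.+1))
  (P : {mpoly K[n.+1]}) : {mpoly K[r.+1]} :=
  comp_mpoly [tuple \sum_(j < r.+1) (M i j)%:MP * 'X_j | i < n.+1] P.

(* Main.v *)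
Require Import Defs.
From HB Require Import structures.
From mathcomp Require Import all_boot all_order all_algebra all_field.
From mathcomp Require Import mpoly.
Set Implicit Arguments. Unset Strict Implicit. Unset Printing Implicit Defensive.
Import GRing.Theory.
Local Open Scope ring_scope.

Lemma mderiv_exp N (K : fieldType) i (G : {mpoly K[N]}) k :
  (G ^+ k.+1)^`M(i) = (G ^+ k * G^`M(i)) *+ k.+1.
Proof.
elim: k => [|k IH]; first by rewrite expr1 expr0 mul1r.
rewrite exprS mderivM IH mulrnAr mulrA -exprS mulrC mulrS.
by rewrite [in RHS]mulrS [in RHS]mulrS.
Qed.

Lemma pchar_mpoly N (K : fieldType) p : p \in [pchar K] -> p \in [pchar {mpoly K[N]}].
Proof. move=> h; exact: (rmorph_pchar (@mpolyC N K) h). Qed.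

Lemma mderiv_pth N (K : fieldType) p i (G : {mpoly K[N]}) :
  p \in [pchar K] -> (G ^+ p)^`M(i) = 0.
Proof.
move=> hp; have p_gt0 : (0 < p)%N by apply: prime_gt0; exact: (pcharf_prime hp).
case: p p_gt0 hp => // p _ hp.
rewrite mderiv_exp -mulr_natr (pcharf0 (pchar_mpoly N hp)) mulr0 //.
Qed.

Definition mdivp N (p : nat) (m : 'X_{1..N}) : 'X_{1..N} := [multinom (m i %/ p)%N | i < N].

Lemma pth_of_deriv (K : finFieldType) p N (F : {mpoly K[N]}) :
  p \in [pchar K] -> (forall i, F^`M(i) = 0) -> is_pth_power p F.
Proof.
move=> hp hF.
have frob_inj : injective (fun x : K => x ^+ p).
  move=> x y /= h; apply: (fmorph_inj (pFrobenius_aut hp)).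
  exact: h.
case: (injF_bij frob_inj) => g fg gf.
have dv : forall m, m \in msupp F -> forall i, (p %| m i)%N.
  move=> m hm i; case: (posnP (m i)) => [->|hmi]; first exact: dvdn0.
  have := congr1 (mcoeff (m - U_(i))) (hF i).
  rewrite mcoeff_mderiv mcoeff0 submK; last by rewrite lep1mP -lt0n.
  rewrite mnmBE mnm1E eqxx subn1 prednK // => /eqP.
  rewrite -mulr_natr mulf_eq0 => /orP[]; first by move=> h0; move: hm; rewrite mcoeff_msupp h0.
  by rewrite (dvdn_pcharf hp).
exists (\sum_(m <- msupp F) g F@_m *: 'X_[mdivp p m]).
rewrite {1}(mpolyE F) -(pFrobenius_autE (pchar_mpoly N hp)) rmorph_sum /=.
rewrite big_seq [RHS]big_seq; apply: eq_bigr => m hm.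
rewrite pFrobenius_autE exprZn gf mpolyXn; congr (_ *: 'X_[_]).
by apply/mnmP => i; rewrite mulmnE mnmE divnK //; exact: dv.
Qed.

Lemma mderivXU N (K : fieldType) (i i' : 'I_N) : ('X_i : {mpoly K[N]})^`M(i') = (i == i')%:R.
Proof.
rewrite mderivX mnm1E; case: eqP => [<-|_]; last by rewrite scale0r.
have -> : (U_(i) - U_(i) = 0)%MM by apply/mnmP => j; rewrite mnmBE subnn mnm0E.
by rewrite mpolyX0 scale1r.
Qed.

Section Chain.
Variables (K : fieldType) (n k : nat) (lq : n.-tuple {mpoly K[k]}) (j : 'I_k).

Definition Pr (F : {mpoly K[n]}) :=
  (comp_mpoly lq F)^`M(j) = \sum_(i < n) (comp_mpoly lq (F^`M(i))) * (tnth lq i)^`M(j).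

Lemma PrD F G : Pr F -> Pr G -> Pr (F + G).
Proof.
rewrite /Pr => hF hG; rewrite comp_mpolyD mderivD hF hG -big_split /=.
by apply: eq_bigr => i _; rewrite mderivD comp_mpolyD mulrDl.
Qed.

Lemma PrZ c F : Pr F -> Pr (c *: F).
Proof.
rewrite /Pr => hF; rewrite comp_mpolyZ mderivZ hF scaler_sumr.
by apply: eq_bigr => i _; rewrite mderivZ comp_mpolyZ scalerAl.
Qed.

Lemma PrC c : Pr c%:MP.
Proof.
rewrite /Pr comp_mpolyC mderivC big1 // => i _.
by rewrite mderivC comp_mpolyC mul0r.
Qed.

Lemma PrM F G : Pr F -> Pr G -> Pr (F * G).
Proof.
rewrite /Pr => hF hG; rewrite rmorphM mderivM hF hG mulr_suml mulr_sumr -big_split /=.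
apply: eq_bigr => i _; rewrite mderivM rmorphD !rmorphM /=.
rewrite mulrDl; congr (_ + _); first by rewrite mulrAC.
by rewrite -!mulrA.
Qed.

Lemma PrX (i : 'I_n) : Pr 'X_i.
Proof.
rewrite /Pr comp_mpolyXU (bigD1 i) //= big1 ?addr0.
  by rewrite mderivXU eqxx comp_mpoly1 mul1r (tnth_nth 0).
move=> i' ne; rewrite mderivXU eq_sym (negbTE ne) comp_mpoly0 mul0r //.
Qed.

Lemma chain F : Pr F.
Proof.
rewrite (mpolyE F); apply: (big_ind Pr).
- by have := PrC 0; rewrite mpolyC0.
- exact: PrD.
move=> m _; apply: PrZ; rewrite mpolyXE_id; apply: (big_ind Pr).
- by have := PrC 1; rewrite mpolyC1.
- exact: PrM.
move=> i _; elim: (m i) => [|e IH].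
  by rewrite expr0; have := PrC 1; rewrite mpolyC1.
by rewrite exprS; apply: PrM => //; exact: PrX.
Qed.
End Chain.

Lemma dhomog_deriv N (K : fieldType) d (F : {mpoly K[N]}) i :
  F \is d.-homog -> F^`M(i) \is d.-1.-homog.
Proof.
move=> /dhomogP hF; apply/dhomogP => m; rewrite mcoeff_msupp mcoeff_mderiv => h.
have hm : (m + U_(i))%MM \in msupp F.
  by rewrite mcoeff_msupp; apply: contraNN h => /eqP ->; rewrite mul0rn.
have := hF _ hm; have := mdegD m U_(i). move=> E1 E2; have E3 : mdeg (m + U_(i))%MM = d := E2. change (mdeg m = d.-1). by rewrite -E3 E1 mdeg1 addn1.
Qed.

Lemma meval_scale N (K : fieldType) e (P : {mpoly K[N]}) c v :
  P \is e.-homog -> P.@[fun i => c * v i] = c ^+ e * P.@[v].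
Proof.
move=> /dhomogP hP; rewrite !mevalE mulr_sumr big_seq [RHS]big_seq.
apply: eq_bigr => m hm; rewrite mulrCA; congr (_ * _).
under eq_bigr do rewrite exprMn.
by rewrite big_split /= prodrXr -mdegE hP.
Qed.

Lemma ordP N (i : 'I_N.+1) : (exists i' : 'I_N, i = widen_ord (leqnSn N) i') \/ i = ord_max.
Proof.
case: (ltnP i N) => h; first by left; exists (Ordinal h); apply: val_inj.
by right; apply: val_inj => /=; apply/eqP; rewrite eqn_leq h -ltnS ltn_ord.
Qed.

Definition restr N (m : 'X_{1..N.+1}) : 'X_{1..N} :=
  [multinom m (widen_ord (leqnSn N) i) | i < N].

Definition Qk N (K : fieldType) (P : {mpoly K[N.+1]}) (k : nat) : {mpoly K[N]} :=
  \sum_(m <- msupp P | m ord_max == k) P@_m *: 'X_[restr m].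

Lemma restrK N (m : 'X_{1..N.+1}) :
  (mnmwiden (restr m) + U_(ord_max) *+ m ord_max)%MM = m.
Proof.
apply/mnmP => i; rewrite mnmDE mulmnE mnm1E.
case: (ordP i) => [[i' ->]|->].
  rewrite mnmwiden_widen mnmE.
  have -> : (ord_max == widen_ord (leqnSn N) i') = false.
    by apply/negbTE; rewrite -val_eqE /= neq_ltn ltn_ord orbT.
  by rewrite mul0n addn0.
by rewrite mnmwiden_ordmax eqxx mul1n.
Qed.

Lemma mwiden_sum N (K : fieldType) (I : Type) (r : seq I) (P : pred I) (F : I -> {mpoly K[N]}) :
  mwiden (\sum_(i <- r | P i) F i) = \sum_(i <- r | P i) mwiden (F i).
Proof. exact: raddf_sum. Qed.

Lemma meval_sum N (K : fieldType) (I : Type) (r : seq I) (P : pred I) (F : I -> {mpoly K[N]}) v :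
  (\sum_(i <- r | P i) F i).@[v] = \sum_(i <- r | P i) (F i).@[v].
Proof. exact: raddf_sum. Qed.

Lemma decomp N (K : fieldType) (P : {mpoly K[N.+1]}) S :
  (forall m, m \in msupp P -> (m ord_max < S)%N) ->
  P = \sum_(k < S) mwiden (Qk P k) * 'X_ord_max ^+ k.
Proof.
move=> hS.
rewrite /Qk.
under eq_bigr do rewrite mwiden_sum mulr_suml.
rewrite (exchange_big_dep xpredT) //= {1}(mpolyE P) big_seq [RHS]big_seq.
apply: eq_bigr => m hm.
rewrite (big_pred1 (Ordinal (hS m hm))); last first.
  by move=> k /=; rewrite eq_sym -val_eqE.
rewrite mwidenZ mwidenX /= -scalerAl mpolyXn -mpolyXD restrK //.
Qed.

Lemma meval_mwiden N (K : fieldType) (Q : {mpoly K[N]}) v :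
  (mwiden Q).@[v] = Q.@[fun i => v (widen_ord (leqnSn N) i)].
Proof.
rewrite {1}(mpolyE Q) mwiden_sum meval_sum [RHS]mevalE.
apply: eq_bigr => m _; rewrite mwidenZ mwidenX mevalZ mevalX.
by rewrite big_ord_recr /= mnmwiden_ordmax expr0 mulr1; under eq_bigr do rewrite mnmwiden_widen.
Qed.

Lemma Qk_homog N (K : fieldType) e (P : {mpoly K[N.+1]}) k :
  P \is e.-homog -> Qk P k \is (e - k).-homog.
Proof.
move=> /dhomogP hP; rewrite /Qk big_seq_cond; apply: rpred_sum => m /andP[hm /eqP hk].
apply: rpredZ; rewrite dhomogX; apply/eqP.
have E : mdeg m = e := hP m hm.
change (mdeg (restr m) = e - k)%N.
rewrite (mdegE m) big_ord_recr /= in E.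
rewrite mdegE; under eq_bigr do rewrite mnmE.
by rewrite -E hk addnK.
Qed.

Lemma mpoly0var (K : fieldType) (P : {mpoly K[0]}) : P = (P@_0%MM)%:MP.
Proof.
apply/mpolyP => m; rewrite mcoeffC.
have -> : m = 0%MM by apply/mnmP => -[].
by rewrite eqxx mulr1.
Qed.

Lemma sum_delta_nat (K : fieldType) S (f : nat -> K) (j : nat) :
  \sum_(k < S) f k * (j == k :> nat)%:R = if (j < S)%N then f j else 0.
Proof.
case: ltnP => h.
  rewrite (bigD1 (Ordinal h)) //= eqxx mulr1 big1 ?addr0 // => k hk.
  by rewrite (_ : (j == k) = false) ?mulr0 //; apply/negbTE; rewrite eq_sym -val_eqE /= in hk.
rewrite big1 // => k _; rewrite (_ : (j == k) = false) ?mulr0 //.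
by apply/negbTE; rewrite neq_ltn (leq_trans (ltn_ord k) h) orbT.
Qed.

Lemma Hvan (K : finFieldType) N : forall e (P : {mpoly K[N]}), (e <= #|K|)%N ->
  P \is e.-homog -> (forall v, P.@[v] = 0) -> P = 0.
Proof.
elim: N => [|N IH] e P he hP hv.
  rewrite (mpoly0var P); have := hv (fun _ => 0).
  by rewrite {1}(mpoly0var P) mevalC => ->; exact: mpolyC0.
set q := #|K|.
have q2 : (1 < q)%N := card_finNzRing_gt1 K.
have hS : forall m, m \in msupp P -> (m ord_max < e.+1)%N.
  move=> m hm; have E : mdeg m = e := (dhomogP _ _ _ hP) m hm.
  by rewrite ltnS -E mdegE big_ord_recr /= leq_addl.
rewrite (decomp hS).
suff Q0 : forall k, (k <= e)%N -> Qk P k = 0.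
  by rewrite big1 // => k _; rewrite Q0 ?mwiden0 ?mul0r // -ltnS.
pose ext (a : 'I_N -> K) (t : K) (i : 'I_N.+1) :=
  if unlift ord_max i is Some i' then a i' else t.
pose c a k := (Qk P k).@[a].
pose cp a j := if (j < e.+1)%N then c a j else 0.
have Hpp : forall a t, \sum_(k < e.+1) c a k * t ^+ k = 0.
  move=> a t; rewrite -[RHS](hv (ext a t)) [in RHS](decomp hS) meval_sum.
  apply: eq_bigr => k _.
  rewrite rmorphM /= rmorphXn /= mevalXU meval_mwiden /ext unlift_none.
  congr (_ * _); apply: meval_eq => i.
  rewrite (_ : widen_ord (leqnSn N) i = lift ord_max i) ?liftK //.
  by apply: val_inj; rewrite /= /bump leqNgt ltn_ord.
have Hcoef : forall a j, cp a j = cp a q * ((j == q)%:R - (j == 1)%:R).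
  move=> a.
  pose pp : {poly K} := \sum_(k < e.+1) c a k *: 'X^k.
  have ppc : forall j, pp`_j = cp a j.
    move=> j; rewrite coef_sum.
    under eq_bigr do rewrite coefZ coefXn.
    by rewrite sum_delta_nat.
  pose r := pp - pp`_q *: ('X^q - 'X).
  have rc : forall j, r`_j = cp a j - cp a q * ((j == q)%:R - (j == 1)%:R).
    by move=> j; rewrite coefB coefZ coefB coefXn coefX !ppc.
  have r0 : r = 0.
    apply/eqP; apply: contraT => rn0.
    have := max_poly_roots rn0 (rs := enum K).
    rewrite -cardE enum_uniq => H.
    have : (q < size r)%N.
      apply: H => //; apply/allP => t _.
      rewrite /root /r hornerD hornerN hornerZ hornerD hornerN hornerXn hornerX.
      rewrite expf_card subrr mulr0 subr0 horner_sum.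
      under eq_bigr do rewrite hornerZ hornerXn.
      by rewrite Hpp.
    suff : (size r <= q)%N by move=> h1 h2; have := leq_trans h2 h1; rewrite ltnn.
    apply/leq_sizeP => j hj; rewrite rc.
    case: (ltngtP j q) hj => // [hjq _|->].
      have -> : cp a j = 0 by rewrite /cp ltnS leqNgt (leq_ltn_trans he hjq).
      rewrite (_ : (j == 1) = false) ?subrr ?mulr0 ?subr0 //.
        by apply/negbTE; rewrite neq_ltn (ltn_trans q2 hjq) orbT.
    by move=> _; rewrite (_ : (q == 1) = false) ?subr0 ?mulr1 ?subrr //; apply/negbTE; rewrite neq_ltn q2 orbT.
  by move=> j; apply/eqP; rewrite -subr_eq0 -rc r0 coef0.
have cq0 : forall a, cp a q = 0.
  move=> a; rewrite /cp; case: ltnP => hq //.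
  have eq : e = q by apply/eqP; rewrite eqn_leq he -ltnS hq.
  pose a0 := fun i : 'I_N => 0 * a i.
  have E1 : c a q = c a0 q.
    by rewrite /c /a0 (meval_scale _ _ (Qk_homog q hP)) eq subnn expr0 mul1r.
  have E2 : c a0 1 = 0.
    rewrite /c /a0 (meval_scale _ _ (Qk_homog 1 hP)) expr0n.
    by rewrite eq subn1 (_ : (q.-1 == 0)%N = false) ?mul0r //; apply/negbTE; rewrite -lt0n -ltnS prednK // ltnW.
  have := Hcoef a0 1%N; rewrite /cp hq (_ : (1 < e.+1)%N) ?ltnS ?eq ?(ltnW q2) //.
  rewrite E2 (_ : (1 == q)%N = false) ?eqxx; last by apply/negbTE; rewrite neq_ltn q2.
  by rewrite sub0r mulrN1 => /eqP; rewrite eq_sym oppr_eq0 -E1 => /eqP.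
have call : forall a k, (k <= e)%N -> c a k = 0.
  by move=> a k hk; have := Hcoef a k; rewrite cq0 mul0r /cp ltnS hk.
move=> k hk; apply: (IH (e - k)%N) => //.
- exact: leq_trans (leq_subr k e) he.
- exact: Qk_homog.
- by move=> a; exact: call.
Qed.

Lemma sum_delta_ord (R : nzRingType) m (f : 'I_m -> R) (s : 'I_m) :
  \sum_(j < m) f j * (j == s)%:R = f s.
Proof.
rewrite (bigD1 s) //= eqxx mulr1 big1 ?addr0 // => j /negbTE ->.
by rewrite mulr0.
Qed.

Lemma exists_nonvan (K : finFieldType) N e (P : {mpoly K[N.+1]}) :
  (e <= #|K|)%N -> P \is e.-homog -> P != 0 ->
  exists v, P.@[v] != 0 /\ exists k, v k != 0.
Proof.
move=> he hP nP.
have [v hv] : exists v, P.@[v] != 0.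
  case: (boolP [exists v : {ffun 'I_N.+1 -> K}, P.@[v] != 0]) => [/existsP [v hv]|/existsPn h].
    by exists v.
  case/negP: nP; apply/eqP; apply: (Hvan he hP) => v.
  have := h [ffun i => v i]; rewrite negbK => /eqP <-.
  by apply: meval_eq => i; rewrite ffunE.
case: (boolP [exists k, v k != 0]) => [/existsP [k hk]|/existsPn h0].
  by exists v; split => //; exists k.
have hv0 : v =1 (fun i => 0 * v i) by move=> i; rewrite mul0r; apply/eqP; have := h0 i; rewrite negbK.
case: e he hP => [|e] he hP; last first.
  by case/negP: hv; rewrite (meval_eq P hv0) (meval_scale _ _ hP) expr0n mul0r.
exists (fun _ => 1); split; last by exists ord0; exact: oner_neq0.
have e1 := meval_scale 0 (fun _ => 1) hP; have e2 := meval_scale 0 v hP.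
rewrite expr0 mul1r in e1 e2.
rewrite -e1 (meval_eq P (v2 := fun i => 0 * v i)) ?e2 ?mul1r // => i.
by rewrite !mul0r.
Qed.

Lemma mderiv_sum N (K : fieldType) i (I : Type) (r : seq I) (P : pred I) (F : I -> {mpoly K[N]}) :
  (\sum_(x <- r | P x) F x)^`M(i) = \sum_(x <- r | P x) (F x)^`M(i).
Proof. exact: raddf_sum. Qed.

Lemma deriv_restrict (K : finFieldType) p n r (M : 'M[K]_(n.+1, r.+1)) (F : {mpoly K[n.+1]}) :
  p \in [pchar K] -> is_pth_power p (restrict_lin M F) ->
  forall j, \sum_i (F^`M(i)).@[fun i => M i 0] * M i j = 0.
Proof.
move=> hc [G hG] j.
have D : forall i, (\sum_(x < r.+1) (M i x)%:MP * 'X_x)^`M(j) = (M i j)%:MP.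
  move=> i; rewrite mderiv_sum.
  under eq_bigr do rewrite mderiv_mulC mderivXU.
  by rewrite (sum_delta_ord (fun j' => (M i j')%:MP)).
have E0 : forall i, (\sum_(x < r.+1) (M i x)%:MP * 'X_x).@[fun j' : 'I_r.+1 => (j' == 0)%:R] = M i 0.
  move=> i; rewrite meval_sum.
  under eq_bigr do rewrite mevalM mevalC mevalXU.
  by rewrite (sum_delta_ord (fun j' => M i j')).
have h0 := mderiv_pth j G hc; rewrite -hG in h0.
have := congr1 (meval (fun j' : 'I_r.+1 => (j' == 0)%:R)) h0.
rewrite /restrict_lin chain meval_sum meval0 => E; rewrite -[RHS]E.
apply: eq_bigr => i _.
rewrite mevalM comp_mpoly_meval tnth_mktuple D mevalC; congr (_ * _).
by apply: meval_eq => i'; rewrite tnth_mktuple E0.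
Qed.

Lemma sum_delta_l (R : nzRingType) m (f : 'I_m -> R) (s : 'I_m) :
  \sum_(j < m) (j == s)%:R * f j = f s.
Proof.
rewrite (bigD1 s) //= eqxx mul1r big1 ?addr0 // => j /negbTE ->.
by rewrite mul0r.
Qed.

Definition Mof (K : fieldType) n r (v : 'I_n.+1 -> K) (k0 : 'I_n.+1) (s : 'I_r.+1 -> 'I_n)
  : 'M[K]_(n.+1, r.+1) :=
  \matrix_(i, j) (if j == 0 then v i else (i == lift k0 (s j))%:R).

Lemma rank_Mof (K : fieldType) n r (v : 'I_n.+1 -> K) (k0 : 'I_n.+1) (s : 'I_r.+1 -> 'I_n) :
  v k0 != 0 -> (forall a b, a != 0 -> b != 0 -> s a = s b -> a = b) ->
  \rank (Mof v k0 s) = r.+1.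
Proof.
move=> hv sinj.
pose Nm : 'M[K]_(r.+1, n.+1) := \matrix_(a, i)
  (if a == 0 then (i == k0)%:R / v k0
   else (i == lift k0 (s a))%:R - (i == k0)%:R * (v (lift k0 (s a)) / v k0)).
have NM : Nm *m Mof v k0 s = 1%:M.
  apply/matrixP => a b; rewrite !mxE.
  under eq_bigr do rewrite !mxE.
  case: eqP => [a0|/eqP a0].
    under eq_bigr do rewrite mulrAC -mulrA.
    rewrite (sum_delta_l (fun i => (if b == 0 then v i else (i == lift k0 (s b))%:R) / v k0)) /=.
    case: eqP => [b0|/eqP b0]; first by rewrite divff // a0 b0 eqxx.
    by rewrite (negbTE (neq_lift _ _)) mul0r a0 eq_sym (negbTE b0).
  under eq_bigr do rewrite mulrBl -mulrA.
  rewrite sumrB (sum_delta_l (fun i => (if b == 0 then v i else (i == lift k0 (s b))%:R))).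
  rewrite (sum_delta_l (fun i => (v (lift k0 (s a)) / v k0) * (if b == 0 then v i else (i == lift k0 (s b))%:R))) /=.
  case: eqP => [b0|/eqP b0].
    by rewrite -mulrA mulVf // mulr1 subrr b0 (negbTE a0).
  rewrite (negbTE (neq_lift _ _)) mulr0 subr0.
  case: (eqVneq a b) => [->|ab]; first by rewrite !eqxx.
  rewrite (_ : (lift k0 (s a) == lift k0 (s b)) = false) //; apply/negbTE; apply: contra ab => /eqP /lift_inj h.
  by apply/eqP; apply: sinj => //; rewrite eq_sym.
apply/eqP; rewrite eqn_leq rank_leq_col /=.
by rewrite -{1}(mxrank1 K r.+1) -NM mxrankM_maxr.
Qed.

From mathcomp Require Import zify.

Lemma nz_of_notpth (K : fieldType) p m (X : {mpoly K[m]}) :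
  prime p -> ~ is_pth_power p X -> X != 0.
Proof.
move=> pp nX; apply/negP => /eqP X0; apply: nX; exists 0.
by rewrite X0 expr0n; case: p pp => [|p'].
Qed.

Unset Implicit Arguments. Set Strict Implicit.

Theorem lemma2p1 (K : finFieldType) (p n d : nat) (F : {mpoly K[n.+1]}) :
  prime p -> p \in [pchar K] -> (2 <= n)%N ->
  F != 0 -> F \is d.-homog ->
  (d <= #|K| + 1)%N ->
  ~ is_pth_power p F ->
  forall r : nat, (1 <= r <= n - 1)%N ->
  exists M : 'M[K]_(n.+1, r.+1),
    \rank M = r.+1 /\ restrict_lin M F != 0 /\ ~ is_pth_power p (restrict_lin M F).
Proof.
move=> hp hc n2 F0 hF hd nP r /andP[r1 rn].
have [i0 hi0] : exists i0, F^`M(i0) != 0.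
  case: (boolP [exists i, F^`M(i) != 0]) => [/existsP [i hi]|/existsPn h]; first by exists i.
  exfalso; apply: nP; apply: (pth_of_deriv hc) => i; apply/eqP.
  by have := h i; rewrite negbK.
have hP := dhomog_deriv i0 hF.
have he : (d.-1 <= #|K|)%N by move: hd; case: d {hF hP} => //= d'; rewrite addn1 ltnS.
have [v [hv [k hk]]] := exists_nonvan he hP hi0.
have n_gt0 : (0 < n)%N by lia.
pose tau (u : 'I_n) (j : 'I_r.+1) : 'I_n := Ordinal (ltn_pmod (u + j.-1) n_gt0).
have tinj : forall u a b, a != 0 -> b != 0 -> tau u a = tau u b -> a = b.
  move=> u a b a0 b0 /(congr1 val) /= /eqP; rewrite eqn_modDl !modn_small.
  - move=> /eqP h; apply: val_inj => /=.
    have a1 : (0 < a)%N by rewrite lt0n.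
    have b1 : (0 < b)%N by rewrite lt0n.
    lia.
  - have := ltn_ord b; lia.
  - have := ltn_ord a; lia.
have Mcol0 : forall k0 (s : 'I_r.+1 -> 'I_n) (Q : {mpoly K[n.+1]}), Q.@[fun i => Mof v k0 s i 0] = Q.@[v].
  by move=> k0 s Q; apply: meval_eq => i; rewrite mxE.
case: (boolP [exists k', (k' != i0) && (v k' != 0)]) => [/existsP [k0 /andP [k0i0 hk0]] | /existsPn hno].
  case: (unliftP k0 i0) => [u hu|e]; last by move: k0i0; rewrite e eqxx.
  have nX : ~ is_pth_power p (restrict_lin (Mof v k0 (tau u)) F).
    move=> H; have := deriv_restrict hc H (Ordinal (r1 : (1 < r.+1)%N)).
    under eq_bigr do rewrite Mcol0 mxE /=.
    have -> : tau u (Ordinal (r1 : (1 < r.+1)%N)) = u.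
      by apply: val_inj; rewrite /= addn0 modn_small.
    rewrite -hu; under eq_bigr do rewrite mulrC.
    by rewrite sum_delta_l; apply/eqP.
  exists (Mof v k0 (tau u)); split; first exact: (rank_Mof hk0 (tinj u)).
  by split; [exact: (nz_of_notpth hp nX) | exact: nX].
have vi0 : v i0 != 0.
  case: (eqVneq k i0) => [<-//|ki0].
  by have := hno k; rewrite ki0 hk.
have nX : ~ is_pth_power p (restrict_lin (Mof v i0 (tau (Ordinal n_gt0))) F).
  move=> H; have := deriv_restrict hc H 0.
  under eq_bigr do rewrite Mcol0 mxE /=.
  rewrite (bigD1 i0) //= big1 ?addr0.
    by apply/eqP; rewrite mulf_neq0.
  move=> i hi; have := hno i; rewrite hi /= negbK => /eqP ->.
  by rewrite mulr0.
exists (Mof v i0 (tau (Ordinal n_gt0))); split; first exact: (rank_Mof vi0 (tinj _)).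
by split; [exact: (nz_of_notpth hp nX) | exact: nX].
Qed.
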